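(* Let $g\ge2$, $q=2g+1$, $\zeta=\exp(2\pi\sqrt{-1}/q)$. For $i=1,\dots,g$ let $\omega_i=\eta_i/B(i/q,i/q)$ where $\eta_i=dx/y^{q-i}$ on $C_{q,1}$, and let $\Omega_A=(\int_{A_j}\omega_i)_{i,j}$, $\Omega_B=(\int_{B_j}\omega_i)_{i,j}$ ($1\le i,j\le g$). Then $$\Omega_A=-\operatorname{diag}(-1+\zeta^i)\,\operatorname{diag}(\zeta^i)\,\big(\zeta^{2i(j-1)}\big)_{i,j},\qquad \Omega_B=\operatorname{diag}(-1+\zeta^i)\Big(\sum_{k=0}^{j-1}\zeta^{2ik}\Big)_{i,j}.$$
   Context: $C_{q,1}$ is the compact Riemann surface of $y^q=x(1-x)$ (genus $g$); $\{\eta_i\}$ is a basis of holomorphic 1-forms; $B(u,v)=\int_0^1t^{u-1}(1-t)^{v-1}dt$. $\sigma(x,y)=(x,\zeta y)$, $I_0(t)=(t,\sqrt[q]{t(1-t)})$, $c_j$ the class of $I_0\cdot(\sigma^j\circ I_0)^{-1}$. In coordinates $z=4^{1/q}y$, $w=-\sqrt{-1}(2x-1)$ (so $w^2=z^q-1$), $\gamma_k(t)=(\zeta^k 2t,\sqrt{-1}\sqrt{1-(2t)^q})$ for $0\le t\le 1/2$ and $(\zeta^k(2-2t),-\sqrt{-1}\sqrt{1-(2-2t)^q})$ for $1/2\le t\le1$; $A_i=\gamma_{2i-1}\cdot\gamma_{2i}^{-1}$, $B_i=\gamma_{2i-1}\cdot\gamma_{2i-2}^{-1}\cdots\gamma_1\cdot\gamma_0^{-1}$,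 forming a symplectic basis of $H_1(C_{q,1};\mathbb Z)$. $\operatorname{diag}(d_i)$ is the diagonal matrix with $(i,i)$-entry $d_i$. *)

(* Defs.v *)
From Stdlib Require Import Reals.
Open Scope R_scope.

Record Cx : Type := mkC { Cre : R ; Cim : R }.

Definition RC (r : R) : Cx := mkC r 0.
Definition Ci : Cx := mkC 0 1.
Definition C0 : Cx := RC 0.
Definition C1 : Cx := RC 1.
Definition Cadd (z w : Cx) : Cx := mkC (Cre z + Cre w) (Cim z + Cim w).
Definition Copp (z : Cx) : Cx := mkC (- Cre z) (- Cim z).
Definition Csub (z w : Cx) : Cx := Cadd z (Copp w).
Definition Cmul (z w : Cx) : Cx :=
  mkC (Cre z * Cre w - Cim z * Cim w) (Cre z * Cim w + Cim z * Cre w).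
Definition Cinv (z : Cx) : Cx :=
  let n := Cre z * Cre z + Cim z * Cim z in mkC (Cre z / n) (- Cim z / n).
Definition Cdiv (z w : Cx) : Cx := Cmul z (Cinv w).
Fixpoint Cpow (z : Cx) (n : nat) : Cx :=
  match n with O => C1 | S m => Cmul z (Cpow z m) end.
Fixpoint Csum (n : nat) (f : nat -> Cx) : Cx :=
  match n with O => C0 | S m => Cadd (Csum m f) (f m) end.

Definition zeta (q : nat) : Cx :=
  mkC (cos (2 * PI / INR q)) (sin (2 * PI / INR q)).

Definition ImpInt (h : R -> R) (a b l : R) : Prop :=
  forall eps, 0 < eps -> exists del, 0 < del /\
    forall a' b', a < a' < a + del -> b - del < b' < b ->
      exists pr : Riemann_integrable h a' b', Rabs (RiemannInt pr - l) < eps.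

Definition ImpIntC (h : R -> Cx) (a b : R) (L : Cx) : Prop :=
  ImpInt (fun t => Cre (h t)) a b (Cre L) /\ ImpInt (fun t => Cim (h t)) a b (Cim L).

Definition BetaInt (u v beta : R) : Prop :=
  ImpInt (fun t => Rpower t (u - 1) * Rpower (1 - t) (v - 1)) 0 1 beta.

(** * Line integral of a 1-form  f(x,y) dx  along a smooth piece p|(a,b)
    of a path p : R -> Cx*Cx (in coordinates (x,y)):  int_a^b f(p t) x'(t) dt *)
Definition PieceInt (f : Cx -> Cx -> Cx) (p : R -> Cx * Cx) (a b : R) (L : Cx) : Prop :=
  exists dx : R -> Cx,
    (forall t, a < t < b ->
       derivable_pt_lim (fun s => Cre (fst (p s))) t (Cre (dx t)) /\
       derivable_pt_lim (fun s => Cim (fst (p s))) t (Cim (dx t))) /\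
    ImpIntC (fun t => Cmul (f (fst (p t)) (snd (p t))) (dx t)) a b L.

(** * The paths gamma_k, given in the coordinates (z,w) with
    z = 4^(1/q) y,  w = -sqrt(-1) (2x - 1) *)
Definition gamma_zw (q k : nat) (t : R) : Cx * Cx :=
  if Rle_dec t (1/2) then
    (Cmul (Cpow (zeta q) k) (RC (2 * t)),
     Cmul Ci (RC (sqrt (1 - (2 * t) ^ q))))
  else
    (Cmul (Cpow (zeta q) k) (RC (2 - 2 * t)),
     Copp (Cmul Ci (RC (sqrt (1 - (2 - 2 * t) ^ q))))).

Definition zw_to_xy (q : nat) (zw : Cx * Cx) : Cx * Cx :=
  (Cmul (RC (1/2)) (Cadd C1 (Cmul Ci (snd zw))),
   Cmul (RC (/ Rpower 4 (/ INR q))) (fst zw)).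

Definition gamma_xy (q k : nat) (t : R) : Cx * Cx := zw_to_xy q (gamma_zw q k t).

Definition GammaInt (q : nat) (f : Cx -> Cx -> Cx) (k : nat) (L : Cx) : Prop :=
  exists L1 L2, PieceInt f (gamma_xy q k) 0 (1/2) L1 /\
                PieceInt f (gamma_xy q k) (1/2) 1 L2 /\ L = Cadd L1 L2.

Definition omega_coef (q i : nat) (beta : R) : Cx -> Cx -> Cx :=
  fun x y => Cmul (RC (/ beta)) (Cinv (Cpow y (q - i))).

(** periods over A_j = gamma_{2j-1} . gamma_{2j}^{-1} and
    B_j = gamma_{2j-1} . gamma_{2j-2}^{-1} ... gamma_1 . gamma_0^{-1},
    in terms of the integrals I m over gamma_m *)
Definition periodA (I : nat -> Cx) (j : nat) : Cx := Csub (I (2 * j - 1)%nat) (I (2 * j)%nat).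
Definition periodB (I : nat -> Cx) (j : nat) : Cx :=
  Csum (2 * j) (fun m => if Nat.odd m then I m else Copp (I m)).

Definition OmegaA_val (q i j : nat) : Cx :=
  Copp (Cmul (Cadd (Copp C1) (Cpow (zeta q) i))
             (Cmul (Cpow (zeta q) i) (Cpow (zeta q) (2 * i * (j - 1))))).
Definition OmegaB_val (q i j : nat) : Cx :=
  Cmul (Cadd (Copp C1) (Cpow (zeta q) i)) (Csum j (fun k => Cpow (zeta q) (2 * i * k))).

(* Main.v *)
Require Import Defs.
From Coquelicot Require Import Coquelicot.
From Stdlib Require Import Reals Lra Lia Psatz Ring Field.
Require Import Defs.
Open Scope R_scope.

Lemma Cx_eq (a b : Cx) : Cre a = Cre b -> Cim a = Cim b -> a = b.
Proof. destruct a, b; simpl; intros; subst; reflexivity. Qed.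

Lemma Cx_ring : ring_theory C0 C1 Cadd Cmul Csub Copp (@eq Cx).
Proof.
  constructor; intros; apply Cx_eq; destruct x; try destruct y; try destruct z;
    unfold Cadd, Cmul, Csub, Copp, C0, C1, RC; simpl; ring.
Qed.
Add Ring CxRing : Cx_ring.

Lemma Cpow_add z m n : Cpow z (m + n) = Cmul (Cpow z m) (Cpow z n).
Proof. induction m; simpl. unfold C1, RC; apply Cx_eq; simpl; destruct (Cpow z n); simpl; ring.
  rewrite IHm; ring. Qed.

Lemma Cpow_mul z m n : Cpow z (m * n) = Cpow (Cpow z m) n.
Proof. revert m; induction n; intros m.
  rewrite Nat.mul_0_r; reflexivity.
  replace (m * S n)%nat with (m + m * n)%nat by lia. rewrite Cpow_add, IHn. reflexivity. Qed.

Lemma Cpow_Cmul a b n : Cpow (Cmul a b) n = Cmul (Cpow a n) (Cpow b n).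
Proof. induction n; simpl. unfold C1, RC; apply Cx_eq; simpl; ring. rewrite IHn; ring. Qed.

Lemma Cpow_RC r n : Cpow (RC r) n = RC (r ^ n).
Proof. induction n; simpl. reflexivity. rewrite IHn; unfold RC, Cmul; apply Cx_eq; simpl; ring. Qed.

Lemma zeta_pow q n : (q > 0)%nat ->
  Cpow (zeta q) n = mkC (cos (2 * PI * INR n / INR q)) (sin (2 * PI * INR n / INR q)).
Proof. intros Hq. assert (INR q <> 0) by (apply not_0_INR; lia).
  induction n; simpl Cpow.
  - unfold C1, RC; simpl. replace (2 * PI * 0 / INR q) with 0 by (field; auto). rewrite cos_0, sin_0; reflexivity.
  - rewrite IHn. unfold zeta, Cmul; simpl Cre; simpl Cim. rewrite (S_INR n).
    replace (2 * PI * (INR n + 1) / INR q) with (2 * PI / INR q + 2 * PI * INR n / INR q) by (field; auto).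
    rewrite cos_plus, sin_plus. apply Cx_eq; simpl; ring.
Qed.

Lemma zeta_q q : (q > 0)%nat -> Cpow (zeta q) q = C1.
Proof. intros Hq. rewrite zeta_pow by auto. assert (INR q <> 0) by (apply not_0_INR; lia).
  replace (2 * PI * INR q / INR q) with (2 * PI) by (field; auto).
  rewrite cos_2PI, sin_2PI. reflexivity. Qed.

Lemma Cinv_aux1 a b c d : a*c - b*d = 1 -> a*d+b*c = 0 -> a*a+b*b<>0 -> a/(a*a+b*b) = c.
Proof. intros. apply (Rmult_eq_reg_r (a*a+b*b)); auto. field_simplify; auto.
  first [transitivity (a*(a*c-b*d) + b*(a*d+b*c)); [ring | rewrite H, H0; ring] | transitivity (a*(a*c-b*d) + b*(a*d+b*c)); [rewrite H, H0; ring | ring]]. Qed.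
Lemma Cinv_aux2 a b c d : a*c - b*d = 1 -> a*d+b*c = 0 -> a*a+b*b<>0 -> -b/(a*a+b*b) = d.
Proof. intros. apply (Rmult_eq_reg_r (a*a+b*b)); auto. field_simplify; auto.
  transitivity (a*(a*d+b*c) - b*(a*c-b*d)); [rewrite H, H0; ring | ring]. Qed.
Lemma Cinv_unique w w' : Cmul w w' = C1 -> Cinv w = w'.
Proof. destruct w as [a b], w' as [c d]; unfold Cmul, C1, RC, Cinv; simpl; intro H; injection H; intros H2 H1.
  assert (Hn : a * a + b * b <> 0) by (intro; nra).
  apply Cx_eq; simpl. apply (Cinv_aux1 a b c d); auto. apply (Cinv_aux2 a b c d); auto. Qed.


Definition ImpInt' (h : R -> R) (a b l : R) : Prop :=
  forall eps, 0 < eps -> exists del, 0 < del /\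
    forall a' b', a < a' < a + del -> b - del < b' < b ->
      ex_RInt h a' b' /\ Rabs (RInt h a' b' - l) < eps.

Lemma ImpInt_iff h a b l : ImpInt h a b l <-> ImpInt' h a b l.
Proof. split; intros H eps Heps; destruct (H eps Heps) as [del [Hd H']]; exists del; split; auto;
  intros a' b' Ha Hb; specialize (H' a' b' Ha Hb).
  - destruct H' as [pr Hpr]. split. apply ex_RInt_Reals_1; auto. rewrite (RInt_Reals _ _ _ pr); auto.
  - destruct H' as [Hex Hl]. exists (ex_RInt_Reals_0 _ _ _ Hex). rewrite <- RInt_Reals; auto.
Qed.

Lemma ImpInt'_unique h a b l1 l2 : a < b -> ImpInt' h a b l1 -> ImpInt' h a b l2 -> l1 = l2.
Proof. intros Hab H1 H2. destruct (Req_dec l1 l2) as [|Hne]; auto. exfalso.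
  assert (He : 0 < Rabs (l1 - l2) / 2) by (assert (0 < Rabs (l1 - l2)) by (apply Rabs_pos_lt; lra); lra).
  destruct (H1 _ He) as [d1 [Hd1 K1]]. destruct (H2 _ He) as [d2 [Hd2 K2]].
  set (d := Rmin (Rmin d1 d2) (b - a)).
  assert (0 < d) by (unfold d; repeat apply Rmin_glb_lt; lra).
  assert (d <= d1 /\ d <= d2 /\ d <= b - a) by (unfold d; repeat split;
    [eapply Rle_trans; [apply Rmin_l|apply Rmin_l] | eapply Rle_trans; [apply Rmin_l|apply Rmin_r] | apply Rmin_r]).
  destruct (K1 (a + d/2) (b - d/2)) as [_ A1]; try lra.
  destruct (K2 (a + d/2) (b - d/2)) as [_ A2]; try lra.
  assert (Rabs (l1 - l2) <= Rabs (RInt h (a + d / 2) (b - d / 2) - l1) + Rabs (RInt h (a + d / 2) (b - d / 2) - l2)).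
  { replace (l1 - l2) with (-(RInt h (a + d / 2) (b - d / 2) - l1) + (RInt h (a + d / 2) (b - d / 2) - l2)) by ring.
    eapply Rle_trans; [apply Rabs_triang|]. rewrite Rabs_Ropp; lra. }
  lra.
Qed.

Lemma ImpInt'_ext f g a b l : a < b -> (forall t, a < t < b -> f t = g t) ->
  ImpInt' f a b l -> ImpInt' g a b l.
Proof. intros Hab Hfg H eps Heps. destruct (H eps Heps) as [del [Hd K]].
  exists (Rmin del ((b - a)/2)). split. apply Rmin_glb_lt; lra.
  intros a' b' Ha Hb. assert (Rmin del ((b-a)/2) <= del) by apply Rmin_l.
  assert (Rmin del ((b-a)/2) <= (b-a)/2) by apply Rmin_r.
  destruct (K a' b') as [Ke Kl]; try lra.
  assert (E : forall x, Rmin a' b' < x < Rmax a' b' -> f x = g x).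
  { intros x Hx. rewrite Rmin_left in Hx by lra. rewrite Rmax_right in Hx by lra. apply Hfg; lra. }
  split. eapply ex_RInt_ext; eauto. rewrite <- (RInt_ext _ _ _ _ E); auto.
Qed.

Lemma ImpInt'_scal f a b l c : ImpInt' f a b l -> ImpInt' (fun t => c * f t) a b (c * l).
Proof. intros H eps Heps.
  destruct (H (eps / (Rabs c + 1))) as [del [Hd K]].
  { apply Rdiv_lt_0_compat; auto. pose proof (Rabs_pos c); lra. }
  exists del; split; auto. intros a' b' Ha Hb. destruct (K a' b' Ha Hb) as [Ke Kl].
  split. apply (ex_RInt_scal f a' b' c Ke).
  replace (RInt (fun t => c * f t) a' b') with (scal c (RInt f a' b')) by (rewrite <- RInt_scal; auto). unfold scal; simpl; unfold mult; simpl.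
  replace (c * RInt f a' b' - c * l) with (c * (RInt f a' b' - l)) by ring.
  rewrite Rabs_mult. pose proof (Rabs_pos c). pose proof (Rabs_pos (RInt f a' b' - l)).
  apply Rlt_le_trans with ((Rabs c + 1) * (eps / (Rabs c + 1))).
  - apply Rle_lt_trans with (Rabs c * (eps / (Rabs c + 1))). apply Rmult_le_compat_l; lra.
    apply Rmult_lt_compat_r. apply Rdiv_lt_0_compat; lra. lra.
  - right; field; lra.
Qed.

Lemma RInt_reflect (f : R -> R) x y : ex_RInt f (1 - x) (1 - y) ->
  ex_RInt (fun t => f (1 - t)) x y /\ RInt (fun t => f (1 - t)) x y = - RInt f (1 - x) (1 - y).
Proof. intros H.
  assert (H' : ex_RInt f (-1 * x + 1) (-1 * y + 1)) by (replace (-1*x+1) with (1-x) by ring; replace (-1*y+1) with (1-y) by ring; auto).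
  pose proof (ex_RInt_comp_lin f (-1) 1 x y H') as E1.
  pose proof (RInt_comp_lin f (-1) 1 x y H') as E2.
  replace (-1*x+1) with (1-x) in E2 by ring. replace (-1*y+1) with (1-y) in E2 by ring.
  assert (Ef : forall t, scal (-1) (f (-1 * t + 1)) = - f (1 - t)).
  { intro t. unfold scal; simpl; unfold mult; simpl. replace (-1*t+1) with (1-t) by ring. ring. }
  split.
  - apply (ex_RInt_ext (fun t => - (scal (-1) (f (-1 * t + 1))))).
    intros t _. rewrite Ef; apply Ropp_involutive. apply (ex_RInt_opp _ _ _ E1).
  - assert (X : ex_RInt (fun t => f (1 - t)) x y).
    { apply (ex_RInt_ext (fun t => - (scal (-1) (f (-1 * t + 1))))).
      intros t _. rewrite Ef; apply Ropp_involutive. apply (ex_RInt_opp _ _ _ E1). }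
    rewrite <- E2. rewrite (RInt_ext (fun y : R => scal (-1) (f (-1 * y + 1))) (fun t => opp (f (1 - t)))).
    2: { intros t _. rewrite Ef. reflexivity. }
    pose proof (RInt_opp (V:=R_CompleteNormedModule) (fun t => f (1-t)) x y X) as Z. transitivity (- (@opp R_AbelianGroup (RInt (fun t => f (1-t)) x y))). unfold opp; simpl. symmetry; apply Ropp_involutive. f_equal. symmetry. exact Z.
Qed.

Lemma ImpInt'_reflect f a b l : ImpInt' f a b l -> ImpInt' (fun t => f (1 - t)) (1 - b) (1 - a) l.
Proof. intros H eps Heps. destruct (H eps Heps) as [del [Hd K]]. exists del; split; auto.
  intros a' b' Ha Hb. destruct (K (1 - b') (1 - a')) as [Ke Kl]; try lra.
  assert (Ke' : ex_RInt f (1 - a') (1 - b')) by (apply ex_RInt_swap; auto).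
  destruct (RInt_reflect f a' b' Ke') as [E1 E2]. split; auto. rewrite E2.
  replace (- RInt f (1 - a') (1 - b')) with (RInt f (1 - b') (1 - a')). exact Kl. rewrite <- (opp_RInt_swap f _ _ Ke'). reflexivity.
Qed.


Lemma exp_le_mono x y : x <= y -> exp x <= exp y.
Proof. intros [H|H]. left; apply exp_increasing; auto. subst; lra. Qed.

Lemma ln_neg t : 0 < t < 1 -> ln t < 0.
Proof. intros. rewrite <- ln_1. apply ln_increasing; lra. Qed.
Lemma ln_nonpos t : 0 < t <= 1 -> ln t <= 0.
Proof. intros. rewrite <- ln_1. apply ln_le; lra. Qed.

Lemma ln2_pos : 0 < ln 2.
Proof. pose proof ln_lt_2; lra. Qed.

Lemma Rpower_ge1 t c : 0 < t <= 1 -> c <= 0 -> 1 <= Rpower t c.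
Proof. intros Ht Hc. unfold Rpower. rewrite <- exp_0. apply exp_le_mono.
  pose proof (ln_nonpos t Ht). nra. Qed.

Lemma Rpower_pos t c : 0 < Rpower t c.
Proof. unfold Rpower; apply exp_pos. Qed.

Lemma Rpower_le_inv t s c : 0 < s <= 1 -> s <= t -> -1 <= c <= 0 -> Rpower t c <= / s.
Proof. intros Hs Hst Hc. pose proof (ln_nonpos s Hs). unfold Rpower. rewrite <- (exp_ln (/ s)) by (apply Rinv_0_lt_compat; lra).
  apply exp_le_mono. rewrite ln_Rinv by lra.
  pose proof (ln_le s t (proj1 Hs) Hst).
  destruct (Rle_dec 0 (ln s)).
  - nra.
  - nra.
Qed.

Lemma continuous_Rpower c t : 0 < t -> continuous (fun x => Rpower x c) t.
Proof. intros Ht. apply (ex_derive_continuous (K:=R_AbsRing) (V:=R_NormedModule)). exists (c * Rpower t (c - 1)).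
  apply is_derive_Reals. apply derivable_pt_lim_power; auto. Qed.

Section Beta.
Variable u : R.
Hypothesis Hu : 0 < u < 1.

Definition Fb (t : R) : R := Rpower t (u - 1) * Rpower (1 - t) (u - 1).

Lemma Fb_sym t : Fb (1 - t) = Fb t.
Proof. unfold Fb. replace (1 - (1 - t)) with t by ring. ring. Qed.

Lemma Fb_cont t : 0 < t < 1 -> continuous Fb t.
Proof. intros Ht. unfold Fb. apply (continuous_mult (fun x => Rpower x (u-1)) (fun x => Rpower (1-x) (u-1))).
  apply continuous_Rpower; lra.
  apply (continuous_comp (fun x => 1 - x) (fun y => Rpower y (u-1))).
  apply (continuous_minus (fun _ => 1) (fun x => x)). apply continuous_const. apply continuous_id.
  apply continuous_Rpower; lra. Qed.

Lemma Fb_ex x y : 0 < x < 1 -> 0 < y < 1 -> ex_RInt Fb x y.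
Proof. intros. apply (ex_RInt_continuous (V:=R_CompleteNormedModule)). intros z Hz. apply Fb_cont.
  split. eapply Rlt_le_trans; [|apply Hz]. apply Rmin_glb_lt; lra.
  eapply Rle_lt_trans; [apply Hz|]. apply Rmax_lub_lt; lra. Qed.

Lemma Fb_ge1 t : 0 < t < 1 -> 1 <= Fb t.
Proof. intros. unfold Fb. pose proof (Rpower_ge1 t (u-1)). pose proof (Rpower_ge1 (1-t) (u-1)).
  assert (1 <= Rpower t (u-1)) by (apply Rpower_ge1; lra). assert (1 <= Rpower (1-t) (u-1)) by (apply Rpower_ge1; lra). nra. Qed.

Lemma Fb_le t : 0 < t <= 1/2 -> Fb t <= 2 * Rpower t (u - 1).
Proof. intros. unfold Fb. assert (Rpower (1 - t) (u - 1) <= / (1/2)) by (apply Rpower_le_inv; lra).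
  pose proof (Rpower_pos t (u-1)). replace (/ (1/2)) with 2 in H0 by field. nra. Qed.

Lemma Fb_le8 t : 1/4 <= t <= 1/2 -> Fb t <= 8.
Proof. intros. eapply Rle_trans. apply Fb_le; lra.
  assert (Rpower t (u-1) <= / (1/4)) by (apply Rpower_le_inv; lra). replace (/ (1/4)) with 4 in H0 by field. lra. Qed.

Definition G (a : R) := RInt Fb a (1/2).

Lemma RInt_pow_bound a : 0 < a <= 1/2 -> RInt (fun t => Rpower t (u - 1)) a (1/2) <= / u.
Proof. intros Ha.
  assert (D : is_RInt (fun t => Rpower t (u - 1)) a (1/2) (minus (Rpower (1/2) u / u) (Rpower a u / u))).
  { apply (is_RInt_derive (fun t => Rpower t u / u)).
    - intros x Hx. rewrite Rmin_left in Hx by lra. rewrite Rmax_right in Hx by lra.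
      apply is_derive_Reals.
      replace (Rpower x (u - 1)) with ((u * Rpower x (u - 1)) * / u) by (field; lra).
      apply derivable_pt_lim_div_scal. apply derivable_pt_lim_power. lra.
    - intros x Hx. rewrite Rmin_left in Hx by lra. rewrite Rmax_right in Hx by lra.
      apply continuous_Rpower. lra. }
  rewrite (is_RInt_unique _ _ _ _ D). unfold minus, plus, opp; simpl.
  assert (Rpower (1/2) u <= 1).
  { unfold Rpower. apply Rle_trans with (exp 0); [apply exp_le_mono | rewrite exp_0; lra]. assert (ln (1/2) <= 0) by (apply ln_nonpos; lra). nra. }
  pose proof (Rpower_pos a u).
  apply Rle_trans with (Rpower (1/2) u / u). assert (0 < / u) by (apply Rinv_0_lt_compat; lra).
  unfold Rdiv. nra. unfold Rdiv. assert (0 < / u) by (apply Rinv_0_lt_compat; lra). nra.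
Qed.

Lemma Fb_lower a b : 0 < a <= b -> b < 1 -> b - a <= RInt Fb a b.
Proof. intros. replace (b - a) with (RInt (fun _ => 1) a b).
  apply RInt_le; try lra. apply ex_RInt_const. apply Fb_ex; lra. intros; apply Fb_ge1; lra.
  rewrite RInt_const. unfold scal; simpl; unfold mult; simpl. ring. Qed.

Lemma Fb_tail b : 1/4 <= b <= 1/2 -> RInt Fb b (1/2) <= 8 * (1/2 - b).
Proof. intros. replace (8 * (1/2 - b)) with (RInt (fun _ => 8) b (1/2)).
  apply RInt_le; try lra. apply Fb_ex; lra. apply ex_RInt_const. intros; apply Fb_le8; lra.
  rewrite RInt_const. unfold scal; simpl; unfold mult; simpl. ring. Qed.

Lemma Chasles_Fb a b c : 0 < a < 1 -> 0 < b < 1 -> 0 < c < 1 -> RInt Fb a c = RInt Fb a b + RInt Fb b c.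
Proof. intros. symmetry. apply (RInt_Chasles (V:=R_CompleteNormedModule)); apply Fb_ex; lra. Qed.

Lemma G_bound a : 0 < a <= 1/2 -> G a <= 2 / u.
Proof. intros. unfold G.
  assert (Ex : ex_RInt (fun t => Rpower t (u - 1)) a (1/2)).
  { apply (ex_RInt_continuous (V:=R_CompleteNormedModule)). intros z Hz. rewrite Rmin_left in Hz by lra.
    apply continuous_Rpower. lra. }
  apply Rle_trans with (RInt (fun t => scal 2 (Rpower t (u - 1))) a (1/2)).
  apply RInt_le; try lra. apply Fb_ex; lra. apply (ex_RInt_scal (V:=R_NormedModule)); auto.
  intros; unfold scal; simpl; unfold mult; simpl; apply Fb_le; lra.
  replace (RInt (fun t => scal 2 (Rpower t (u - 1))) a (1/2)) with (2 * RInt (fun t => Rpower t (u - 1)) a (1/2)).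
  pose proof (RInt_pow_bound a H). unfold Rdiv. lra.
  symmetry. exact (RInt_scal (V:=R_CompleteNormedModule) _ _ _ 2 Ex). Qed.

Definition GE (y : R) : Prop := exists a, 0 < a < 1/2 /\ y = G a.

Lemma GE_bound : bound GE.
Proof. exists (2 / u). intros y [a [Ha ->]]. apply G_bound; lra. Qed.
Lemma GE_ne : exists y, GE y.
Proof. exists (G (1/4)). exists (1/4). split; [lra|auto]. Qed.

Definition B1 : R := proj1_sig (completeness GE GE_bound GE_ne).
Lemma B1_lub : is_lub GE B1.
Proof. unfold B1. destruct (completeness GE GE_bound GE_ne); auto. Qed.

Lemma G_anti a b : 0 < a <= b -> b <= 1/2 -> G b <= G a.
Proof. intros. unfold G. rewrite (Chasles_Fb a b (1/2)) by lra. pose proof (Fb_lower a b). lra. Qed.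

Lemma B1_pos : 1/4 <= B1.
Proof. destruct B1_lub as [Hub _]. apply Rle_trans with (G (1/4)).
  unfold G. pose proof (Fb_lower (1/4) (1/2)). lra. apply Hub. exists (1/4); split; [lra|auto]. Qed.

Lemma G_lim eps : 0 < eps -> exists del, 0 < del <= 1/4 /\ forall a, 0 < a < del -> Rabs (G a - B1) < eps.
Proof. intros He. destruct B1_lub as [Hub Hl].
  assert (exists a0, 0 < a0 < 1/2 /\ B1 - eps < G a0) as [a0 [Ha0 Hg]].
  { apply Classical_Prop.NNPP. intro N. assert (B1 <= B1 - eps); [|lra].
    apply Hl. intros y [a [Ha ->]]. apply Rnot_lt_le. intro. apply N. exists a; split; auto. }
  exists (Rmin a0 (1/4)). split. split. apply Rmin_glb_lt; lra. apply Rmin_r.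
  intros a Ha. assert (Rmin a0 (1/4) <= a0) by apply Rmin_l. assert (Rmin a0 (1/4) <= 1/4) by apply Rmin_r.
  assert (G a <= B1) by (apply Hub; exists a; split; [lra|auto]).
  assert (G a0 <= G a) by (apply G_anti; lra).
  apply Rabs_def1; lra. Qed.

Lemma ImpInt_half : ImpInt' Fb 0 (1/2) B1.
Proof. intros eps He. destruct (G_lim (eps/2)) as [d [Hd K]]; [lra|].
  exists (Rmin d (eps / 32)). split. apply Rmin_glb_lt; lra.
  intros a' b' Ha Hb. assert (Rmin d (eps/32) <= d) by apply Rmin_l. assert (Rmin d (eps/32) <= eps/32) by apply Rmin_r.
  split. apply Fb_ex; lra.
  assert (E : RInt Fb a' b' = G a' - RInt Fb b' (1/2)) by (unfold G; rewrite (Chasles_Fb a' b' (1/2)) by lra; simpl; lra).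
  rewrite E. pose proof (K a' ltac:(lra)). pose proof (Fb_tail b' ltac:(lra)). pose proof (Fb_lower b' (1/2) ltac:(lra) ltac:(lra)).
  apply Rabs_def2 in H1. apply Rabs_def1; lra. Qed.

Lemma RInt_right_half b : 1/2 <= b < 1 -> RInt Fb (1/2) b = G (1 - b).
Proof. intros. unfold G.
  destruct (RInt_reflect Fb (1/2) b) as [_ E]. replace (1 - 1/2) with (1/2) by field. apply Fb_ex; lra.
  rewrite (RInt_ext Fb (fun t => Fb (1 - t))) by (intros; rewrite Fb_sym; auto). rewrite E.
  replace (1 - 1/2) with (1/2) by field.
  pose proof (opp_RInt_swap (V:=R_CompleteNormedModule) Fb (1/2) (1-b) ltac:(apply Fb_ex; lra)) as Z.
  unfold opp in Z; simpl in Z. simpl. lra. Qed.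

Lemma ImpInt_full : ImpInt' Fb 0 1 (2 * B1).
Proof. intros eps He. destruct (G_lim (eps/2)) as [d [Hd K]]; [lra|].
  exists d. split. lra.
  intros a' b' Ha Hb. split. apply Fb_ex; lra.
  rewrite (Chasles_Fb a' (1/2) b') by lra. rewrite RInt_right_half by lra.
  pose proof (K a' ltac:(lra)). pose proof (K (1 - b') ltac:(lra)). fold (G a').
  apply Rabs_def2 in H. apply Rabs_def2 in H0. apply Rabs_def1; lra. Qed.

End Beta.


Lemma pow_le1 x n : 0 <= x <= 1 -> 0 <= x ^ n <= 1.
Proof. intros. induction n; simpl; nra. Qed.

Lemma bernoulli x n : 0 <= x <= 1 -> 1 - x ^ n <= INR n * (1 - x).
Proof. intros. induction n. simpl; lra. rewrite S_INR. simpl. pose proof (pow_le1 x n H). nra. Qed.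

Section Phi.
Variable q : nat.
Hypothesis Hq : (2 <= q)%nat.

Definition phi (t : R) : R := (1 - sqrt (1 - (2 * t) ^ q)) / 2.
Definition dphi (t : R) : R := INR q * (2 * t) ^ (Init.Nat.pred q) / (2 * sqrt (1 - (2 * t) ^ q)).

Lemma s_bounds t : 0 < t < 1/2 -> 0 < (2 * t) ^ q < 1 /\ (2 * t) ^ q <= 2 * t.
Proof. intros Ht. split. split. apply pow_lt; lra. apply pow_lt_1_compat. lra. lia.
  destruct q as [|n]; [lia|]. simpl. pose proof (pow_le1 (2*t) n ltac:(lra)). nra. Qed.

Lemma sq_facts t : 0 < t < 1/2 -> 0 < sqrt (1 - (2 * t) ^ q) < 1 /\
  sqrt (1 - (2 * t) ^ q) * sqrt (1 - (2 * t) ^ q) = 1 - (2 * t) ^ q.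
Proof. intros Ht. destruct (s_bounds t Ht) as [[A B] C].
  assert (E : sqrt (1 - (2 * t) ^ q) * sqrt (1 - (2 * t) ^ q) = 1 - (2 * t) ^ q) by (apply sqrt_sqrt; lra).
  pose proof (sqrt_pos (1 - (2 * t) ^ q)). split; auto. split.
  apply sqrt_lt_R0; lra. nra. Qed.

Lemma phi_bounds t : 0 < t < 1/2 -> 0 < phi t <= t /\ phi t < 1/2.
Proof. intros Ht. destruct (s_bounds t Ht) as [[A B] C]. destruct (sq_facts t Ht) as [[D E] F].
  unfold phi. split; [split|]; nra. Qed.

Lemma phi_near_half d : 0 < d -> exists del, 0 < del <= 1/4 /\ forall t, 1/2 - del < t < 1/2 -> 1/2 - d < phi t.
Proof. intros Hd. assert (0 < INR q) by (apply lt_0_INR; lia).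
  exists (Rmin (1/4) (2 * d * d / INR q)). split. split. apply Rmin_glb_lt. lra. apply Rdiv_lt_0_compat; nra. apply Rmin_l.
  intros t Ht. assert (Rmin (1/4) (2 * d * d / INR q) <= 1/4) by apply Rmin_l.
  assert (M : Rmin (1/4) (2 * d * d / INR q) <= 2 * d * d / INR q) by apply Rmin_r.
  assert (Ht' : 0 < t < 1/2) by lra.
  destruct (sq_facts t Ht') as [[D E] F].
  pose proof (bernoulli (2 * t) q ltac:(lra)).
  assert (INR q * (1 - 2 * t) < 4 * d * d).
  { assert (1 - 2 * t < 2 * (2 * d * d / INR q)) by lra.
    apply Rmult_lt_compat_l with (r := INR q) in H2; auto. replace (INR q * (2 * (2 * d * d / INR q))) with (4 * d * d) in H2 by (field; lra). lra. }
  unfold phi. nra. Qed.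

Lemma phi_deriv t : 0 < t < 1/2 -> is_derive phi t (dphi t).
Proof. intros Ht. destruct (sq_facts t Ht) as [[D E] F]. destruct (s_bounds t Ht) as [[A B] C].
  unfold phi, dphi. auto_derive. lra. unfold Rminus. field. unfold Rminus in D. lra. Qed.

Lemma dphi_cont t : 0 < t < 1/2 -> continuous dphi t.
Proof. intros Ht. destruct (sq_facts t Ht) as [[D E] F]. destruct (s_bounds t Ht) as [[A B] C].
  apply (ex_derive_continuous (K:=R_AbsRing) (V:=R_NormedModule)). unfold dphi. auto_derive. split. lra.
  split; auto. unfold Rminus in D. lra. Qed.

Lemma phi_cont t : 0 < t < 1/2 -> continuous phi t.
Proof. intros. apply (ex_derive_continuous (K:=R_AbsRing) (V:=R_NormedModule)). exists (dphi t). apply phi_deriv; auto. Qed.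

Variable u : R.
Hypothesis Hu : 0 < u < 1.

Definition gphi (t : R) : R := Fb u (phi t) * dphi t.

Lemma change_var a b : 0 < a < 1/2 -> 0 < b < 1/2 ->
  ex_RInt gphi a b /\ RInt gphi a b = RInt (Fb u) (phi a) (phi b).
Proof. intros Ha Hb.
  assert (Hin : forall x, Rmin a b <= x <= Rmax a b -> 0 < x < 1/2).
  { intros x Hx. split. eapply Rlt_le_trans; [|apply Hx]. apply Rmin_glb_lt; lra.
    eapply Rle_lt_trans; [apply Hx|]. apply Rmax_lub_lt; lra. }
  assert (Ext : forall x, scal (dphi x) (Fb u (phi x)) = gphi x).
  { intros x. unfold scal; simpl; unfold mult; simpl. unfold gphi. ring. }
  split.
  - apply (ex_RInt_continuous (V:=R_CompleteNormedModule)). intros z Hz. specialize (Hin z Hz).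
    unfold gphi. apply (continuous_mult (fun x => Fb u (phi x)) dphi).
    apply (continuous_comp phi (Fb u)). apply phi_cont; auto. apply Fb_cont; auto.
    pose proof (phi_bounds z Hin). lra. apply dphi_cont; auto.
  - rewrite <- (RInt_comp (V:=R_CompleteNormedModule) (Fb u) phi dphi).
    apply RInt_ext. intros x _. rewrite Ext. reflexivity.
    intros x Hx. specialize (Hin x Hx). apply Fb_cont; auto. pose proof (phi_bounds x Hin). lra.
    intros x Hx. specialize (Hin x Hx). split. apply phi_deriv; auto. apply dphi_cont; auto.
Qed.

Lemma ImpInt_gphi : ImpInt' gphi 0 (1/2) (B1 u Hu).
Proof. intros eps He. destruct (ImpInt_half u Hu eps He) as [dx [Hdx K]].
  destruct (phi_near_half dx Hdx) as [d2 [Hd2 K2]].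
  exists (Rmin (Rmin dx d2) (1/4)). split. repeat apply Rmin_glb_lt; lra.
  intros a' b' Ha Hb.
  assert (Rmin (Rmin dx d2) (1/4) <= dx /\ Rmin (Rmin dx d2) (1/4) <= d2 /\ Rmin (Rmin dx d2) (1/4) <= 1/4) as [M1 [M2 M3]].
  { repeat split. eapply Rle_trans; [apply Rmin_l|apply Rmin_l]. eapply Rle_trans; [apply Rmin_l|apply Rmin_r]. apply Rmin_r. }
  destruct (change_var a' b') as [E1 E2]; try lra. split; auto. rewrite E2.
  pose proof (phi_bounds a' ltac:(lra)). pose proof (phi_bounds b' ltac:(lra)). pose proof (K2 b' ltac:(lra)).
  apply K; lra. Qed.

End Phi.


Lemma gx_re1 q k t : t <= 1/2 -> Cre (fst (gamma_xy q k t)) = (1 - sqrt (1 - (2*t)^q))/2.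
Proof. intros H. unfold gamma_xy, gamma_zw, zw_to_xy. destruct (Rle_dec t (1/2)); [|lra]. simpl. field. Qed.
Lemma gx_re2 q k t : 1/2 < t -> Cre (fst (gamma_xy q k t)) = (1 + sqrt (1 - (2 - 2*t)^q))/2.
Proof. intros H. unfold gamma_xy, gamma_zw, zw_to_xy. destruct (Rle_dec t (1/2)); [lra|]. simpl. field. Qed.
Lemma gx_im q k t : Cim (fst (gamma_xy q k t)) = 0.
Proof. unfold gamma_xy, gamma_zw, zw_to_xy. destruct (Rle_dec t (1/2)); simpl; ring. Qed.
Lemma gy1 q k t : t <= 1/2 -> snd (gamma_xy q k t) = Cmul (RC (/ Rpower 4 (/ INR q))) (Cmul (Cpow (zeta q) k) (RC (2 * t))).
Proof. intros H. unfold gamma_xy, gamma_zw, zw_to_xy. destruct (Rle_dec t (1/2)); [|lra]. reflexivity. Qed.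
Lemma gy2 q k t : 1/2 < t -> snd (gamma_xy q k t) = Cmul (RC (/ Rpower 4 (/ INR q))) (Cmul (Cpow (zeta q) k) (RC (2 * (1 - t)))).
Proof. intros H. unfold gamma_xy, gamma_zw, zw_to_xy. destruct (Rle_dec t (1/2)); [lra|]. simpl.
  replace (2 - 2 * t) with (2 * (1 - t)) by ring. reflexivity. Qed.

Lemma deriv_im q k t : derivable_pt_lim (fun s => Cim (fst (gamma_xy q k s))) t (Cim (RC 0)).
Proof. apply is_derive_Reals. apply (is_derive_ext (fun _ => 0)). intros; rewrite gx_im; auto.
  apply (is_derive_const (K:=R_AbsRing) (V:=R_NormedModule)). Qed.

Lemma deriv_re1 q k t : (2 <= q)%nat -> 0 < t < 1/2 ->
  derivable_pt_lim (fun s => Cre (fst (gamma_xy q k s))) t (dphi q t).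
Proof. intros Hq Ht. apply is_derive_Reals. apply (is_derive_ext_loc (phi q)).
  - apply (filter_imp (fun s => s < 1/2)). intros s Hs. rewrite gx_re1 by lra. reflexivity.
    apply (open_lt (1/2) t). lra.
  - apply phi_deriv; auto. Qed.

Lemma deriv_re2 q k t : (2 <= q)%nat -> 1/2 < t < 1 ->
  derivable_pt_lim (fun s => Cre (fst (gamma_xy q k s))) t (dphi q (1 - t)).
Proof. intros Hq Ht. apply is_derive_Reals. apply (is_derive_ext_loc (fun s => (1 + sqrt (1 - (2 - 2*s)^q))/2)).
  - apply (filter_imp (fun s => 1/2 < s)). intros s Hs. rewrite gx_re2 by lra. reflexivity.
    apply (open_gt (1/2) t). lra.
  - assert (H1 : 0 < 1 - t < 1/2) by lra. destruct (sq_facts q Hq (1 - t) H1) as [[D1 D2] D3].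
    unfold dphi. replace (2 * (1 - t)) with (2 - 2 * t) by ring.
    destruct (s_bounds q Hq (1 - t) H1) as [[S1 S2] S3]. replace (2 * (1 - t)) with (2 - 2 * t) in * by ring.
    auto_derive. unfold Rminus in *. lra. unfold Rminus in *. field. lra. Qed.

Lemma Fb_phi (q i : nat) t : (2 <= q)%nat -> (1 <= i < q)%nat -> 0 < t < 1/2 ->
  Fb (INR i / INR q) (phi q t) = / ((/ Rpower 4 (/ INR q) * (2 * t)) ^ (q - i)).
Proof. intros Hq Hi Ht.
  assert (Q : 0 < INR q) by (apply lt_0_INR; lia).
  destruct (phi_bounds q Hq t Ht) as [[P1 P2] P3].
  destruct (sq_facts q Hq t Ht) as [[D1 D2] D3].
  unfold Fb. rewrite Rpower_mult_distr by lra.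
  set (w := / Rpower 4 (/ INR q) * (2 * t)).
  assert (W : 0 < w) by (unfold w; apply Rmult_lt_0_compat; [apply Rinv_0_lt_compat; apply Rpower_pos | lra]).
  assert (E1 : phi q t * (1 - phi q t) = w ^ q).
  { unfold w. rewrite Rpow_mult_distr. rewrite pow_inv.
    rewrite <- (Rpower_pow q (Rpower 4 (/ INR q))) by apply Rpower_pos.
    rewrite Rpower_mult. rewrite Rinv_l by lra. rewrite Rpower_1 by lra.
    unfold phi. nra. }
  rewrite E1. rewrite <- (Rpower_pow q w W). rewrite Rpower_mult.
  replace (INR q * (INR i / INR q - 1)) with (- INR (q - i)).
  rewrite Rpower_Ropp. rewrite Rpower_pow by auto. reflexivity.
  rewrite minus_INR by lia. field. lra. Qed.

Lemma RC_mul a b : RC (a * b) = Cmul (RC a) (RC b).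
Proof. apply Cx_eq; simpl; ring. Qed.

Lemma Cpow_C1 k : Cpow C1 k = C1.
Proof. induction k; simpl. reflexivity. rewrite IHk. apply Cx_eq; simpl; ring. Qed.

Lemma zeta_cancel q k i : (0 < q)%nat -> (i <= q)%nat ->
  Cmul (Cpow (zeta q) (k * (q - i))) (Cpow (zeta q) (k * i)) = C1.
Proof. intros. rewrite <- Cpow_add. replace (k * (q - i) + k * i)%nat with (q * k)%nat by nia.
  rewrite Cpow_mul, zeta_q by auto. apply Cpow_C1. Qed.

Lemma Cinv_y q i k c r : (0 < q)%nat -> (i <= q)%nat -> c * r <> 0 ->
  Cinv (Cpow (Cmul (RC c) (Cmul (Cpow (zeta q) k) (RC r))) (q - i)) =
  Cmul (RC (/ ((c * r) ^ (q - i)))) (Cpow (zeta q) (k * i)).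
Proof. intros Hq Hi Hcr. apply Cinv_unique.
  rewrite !Cpow_Cmul, !Cpow_RC, <- Cpow_mul.
  transitivity (Cmul (Cmul (RC (c ^ (q - i))) (Cmul (RC (r ^ (q - i))) (RC (/ (c * r) ^ (q - i)))))
     (Cmul (Cpow (zeta q) (k * (q - i))) (Cpow (zeta q) (k * i)))). ring.
  rewrite zeta_cancel by auto. rewrite <- !RC_mul. rewrite Rpow_mult_distr.
  assert (c <> 0) by (intro; apply Hcr; subst; ring). assert (r <> 0) by (intro; apply Hcr; subst; ring).
  assert (c ^ (q - i) <> 0) by (apply pow_nonzero; auto). assert (r ^ (q - i) <> 0) by (apply pow_nonzero; auto).
  apply Cx_eq; simpl; field; auto. Qed.

Lemma integrand1 q i k beta t : (2 <= q)%nat -> (1 <= i < q)%nat -> 0 < t < 1/2 ->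
  Cmul (omega_coef q i beta (fst (gamma_xy q k t)) (snd (gamma_xy q k t))) (RC (dphi q t)) =
  Cmul (Cmul (Cpow (zeta q) (k * i)) (RC (/ beta))) (RC (gphi q (INR i / INR q) t)).
Proof. intros Hq Hi Ht. rewrite gy1 by lra. unfold omega_coef.
  assert (0 < Rpower 4 (/ INR q)) by apply Rpower_pos.
  assert (NZ : / Rpower 4 (/ INR q) * (2 * t) <> 0).
  { apply Rmult_integral_contrapositive; split. apply Rinv_neq_0_compat; lra. lra. }
  rewrite Cinv_y; try lia; auto.
  unfold gphi. rewrite Fb_phi by auto. apply Cx_eq; simpl; ring. Qed.

Lemma integrand2 q i k beta t : (2 <= q)%nat -> (1 <= i < q)%nat -> 1/2 < t < 1 ->
  Cmul (omega_coef q i beta (fst (gamma_xy q k t)) (snd (gamma_xy q k t))) (RC (dphi q (1 - t))) =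
  Cmul (Cmul (Cpow (zeta q) (k * i)) (RC (/ beta))) (RC (gphi q (INR i / INR q) (1 - t))).
Proof. intros Hq Hi Ht. rewrite gy2 by lra. unfold omega_coef.
  assert (0 < Rpower 4 (/ INR q)) by apply Rpower_pos.
  assert (NZ : / Rpower 4 (/ INR q) * (2 * (1 - t)) <> 0).
  { apply Rmult_integral_contrapositive; split. apply Rinv_neq_0_compat; lra. lra. }
  rewrite Cinv_y; try lia; auto.
  unfold gphi. rewrite Fb_phi by (auto; lra). apply Cx_eq; simpl; ring. Qed.

Lemma ImpIntC_of (h : R -> Cx) a b c (g : R -> R) l : a < b ->
  (forall t, a < t < b -> h t = Cmul c (RC (g t))) -> ImpInt' g a b l -> ImpIntC h a b (Cmul c (RC l)).
Proof. intros Hab He Hg. split; apply ImpInt_iff.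
  - replace (Cre (Cmul c (RC l))) with (Cre c * l) by (simpl; ring).
    apply (ImpInt'_ext (fun t => Cre c * g t)); auto. intros t Ht. rewrite He by auto. simpl; ring.
    apply ImpInt'_scal; auto.
  - replace (Cim (Cmul c (RC l))) with (Cim c * l) by (simpl; ring).
    apply (ImpInt'_ext (fun t => Cim c * g t)); auto. intros t Ht. rewrite He by auto. simpl; ring.
    apply ImpInt'_scal; auto. Qed.

Lemma PieceInt_unique f p a b L1 L2 : a < b -> PieceInt f p a b L1 -> PieceInt f p a b L2 -> L1 = L2.
Proof. intros Hab [d1 [D1 [I1r I1i]]] [d2 [D2 [I2r I2i]]].
  assert (Ed : forall t, a < t < b -> d1 t = d2 t).
  { intros t Ht. destruct (D1 t Ht) as [A1 A2]. destruct (D2 t Ht) as [B1 B2]. apply Cx_eq.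
    eapply uniqueness_limite; eauto. eapply uniqueness_limite; eauto. }
  apply ImpInt_iff in I1r, I1i, I2r, I2i. apply Cx_eq.
  - symmetry; apply (ImpInt'_unique _ a b _ _ Hab I2r).
    refine (ImpInt'_ext _ _ a b _ Hab _ I1r). intros t Ht; rewrite Ed; auto.
  - symmetry; apply (ImpInt'_unique _ a b _ _ Hab I2i).
    refine (ImpInt'_ext _ _ a b _ Hab _ I1i). intros t Ht; rewrite Ed; auto. Qed.

Lemma GammaInt_unique q f k L1 L2 : GammaInt q f k L1 -> GammaInt q f k L2 -> L1 = L2.
Proof. intros [a1 [b1 [A1 [B1 ->]]]] [a2 [b2 [A2 [B2 ->]]]].
  rewrite (PieceInt_unique _ _ 0 (1/2) a1 a2 ltac:(lra) A1 A2), (PieceInt_unique _ _ (1/2) 1 b1 b2 ltac:(lra) B1 B2). reflexivity. Qed.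

Lemma gamma_value q i k beta (Hq : (2 <= q)%nat) (Hi : (1 <= i < q)%nat) (Hu : 0 < INR i / INR q < 1) :
  beta = 2 * B1 (INR i / INR q) Hu ->
  GammaInt q (omega_coef q i beta) k (Cpow (zeta q) (k * i)).
Proof. intros Hb.
  set (u := INR i / INR q) in *.
  set (cc := Cmul (Cpow (zeta q) (k * i)) (RC (/ beta))).
  exists (Cmul cc (RC (B1 u Hu))), (Cmul cc (RC (B1 u Hu))). split; [|split].
  - exists (fun t => RC (dphi q t)). split.
    + intros t Ht. split. exact (deriv_re1 q k t Hq Ht). exact (deriv_im q k t).
    + apply (ImpIntC_of _ 0 (1/2) cc (gphi q u)). lra. intros t Ht. apply integrand1; auto.
      apply ImpInt_gphi; auto.
  - exists (fun t => RC (dphi q (1 - t))). split.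
    + intros t Ht. split. exact (deriv_re2 q k t Hq Ht). exact (deriv_im q k t).
    + apply (ImpIntC_of _ (1/2) 1 cc (fun t => gphi q u (1 - t))). lra. intros t Ht. apply integrand2; auto.
      pose proof (ImpInt'_reflect _ _ _ _ (ImpInt_gphi q Hq u Hu)) as R.
      replace (1 - 1/2) with (1/2) in R by field. replace (1 - 0) with 1 in R by ring. exact R.
  - pose proof (B1_pos u Hu). unfold cc. apply Cx_eq; simpl; rewrite Hb; field; intro; lra.
Qed.


Lemma Csum_ext n f g : (forall m, (m < n)%nat -> f m = g m) -> Csum n f = Csum n g.
Proof. induction n; intros H; simpl. reflexivity. rewrite IHn by (intros; apply H; lia). rewrite H by lia. reflexivity. Qed.

Lemma odd_double j : Nat.odd (2 * j) = false.
Proof. rewrite Nat.odd_mul. reflexivity. Qed.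
Lemma odd_double1 j : Nat.odd (S (2 * j)) = true.
Proof. rewrite Nat.odd_succ, Nat.even_mul. reflexivity. Qed.

Lemma Csum_S n f : Csum (S n) f = Cadd (Csum n f) (f n).
Proof. reflexivity. Qed.

Lemma periodB_alg z j :
  Csum (2 * j) (fun m => if Nat.odd m then Cpow z m else Copp (Cpow z m)) =
  Cmul (Cadd (Copp C1) z) (Csum j (fun k => Cpow z (2 * k))).
Proof. induction j.
  - simpl. apply Cx_eq; simpl; ring.
  - replace (2 * S j)%nat with (S (S (2 * j))) by lia. rewrite !Csum_S. rewrite IHj.
    rewrite odd_double, odd_double1.
    change (Cpow z (S (2 * j))) with (Cmul z (Cpow z (2 * j))).
    ring. Qed.

Theorem mainTheorem8 (g : nat) (Hg : (2 <= g)%nat) :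
  let q := (2 * g + 1)%nat in
  forall i : nat, (1 <= i <= g)%nat ->
  (exists beta, BetaInt (INR i / INR q) (INR i / INR q) beta) /\
  (forall beta, BetaInt (INR i / INR q) (INR i / INR q) beta ->
     (forall m, (m <= 2 * g)%nat ->
        exists L, GammaInt q (omega_coef q i beta) m L) /\
     (forall I : nat -> Cx,
        (forall m, (m <= 2 * g)%nat -> GammaInt q (omega_coef q i beta) m (I m)) ->
        forall j, (1 <= j <= g)%nat ->
          periodA I j = OmegaA_val q i j /\ periodB I j = OmegaB_val q i j)).
Proof.
  intros q i Hi.
  assert (Hq : (2 <= q)%nat) by (unfold q; lia).
  assert (Hiq : (1 <= i < q)%nat) by (unfold q; lia).
  assert (Hu : 0 < INR i / INR q < 1).
  { assert (0 < INR i) by (apply lt_0_INR; lia). assert (INR i < INR q) by (apply lt_INR; lia).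
    split. apply Rdiv_lt_0_compat; lra. apply (Rmult_lt_reg_r (INR q)). lra. field_simplify; lra. }
  split.
  - exists (2 * B1 _ Hu). apply ImpInt_iff. exact (ImpInt_full _ Hu).
  - intros beta Hbeta.
    assert (Hb : beta = 2 * B1 _ Hu).
    { apply ImpInt_iff in Hbeta. exact (ImpInt'_unique _ 0 1 _ _ ltac:(lra) Hbeta (ImpInt_full _ Hu)). }
    split.
    + intros m _. exists (Cpow (zeta q) (m * i)). apply gamma_value with (Hu := Hu); auto.
    + intros I HI j Hj.
      assert (EI : forall m, (m <= 2 * g)%nat -> I m = Cpow (Cpow (zeta q) i) m).
      { intros m Hm. apply (GammaInt_unique q (omega_coef q i beta) m). apply HI; auto.
        rewrite <- Cpow_mul, Nat.mul_comm. apply gamma_value with (Hu := Hu); auto. }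
      set (z := Cpow (zeta q) i) in *.
      split.
      * unfold periodA, OmegaA_val. rewrite !EI by lia. destruct j as [|j']; [lia|].
        replace (2 * S j' - 1)%nat with (S (2 * j')) by lia.
        replace (2 * S j')%nat with (S (S (2 * j'))) by lia.
        replace (2 * i * (S j' - 1))%nat with (i * (2 * j'))%nat by lia.
        rewrite Cpow_mul. fold z.
        change (Cpow z (S (2 * j'))) with (Cmul z (Cpow z (2 * j'))).
        change (Cpow z (S (S (2 * j')))) with (Cmul z (Cmul z (Cpow z (2 * j')))).
        unfold Csub. ring.
      * unfold periodB, OmegaB_val.
        rewrite (Csum_ext _ _ (fun m => if Nat.odd m then Cpow z m else Copp (Cpow z m))).
        rewrite periodB_alg. f_equal. apply Csum_ext. intros m Hm.
        unfold z. rewrite <- Cpow_mul. f_equal. lia.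
        intros m Hm. rewrite EI by lia. reflexivity.
Qed.
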